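(* Let $Y$ be a solid vector space and $(X,d)$ a cone metric space over $Y$. Suppose $(x_n)_{n\ge0}$ is a sequence in $X$ with $d(x_n,x_m)\preceq b_n$ for all $n,m\ge0$ with $m\ge n$, where $(b_n)$ is a sequence in $Y$ with $b_n\to0$. Then: (i) $(x_n)$ is a Cauchy sequence in $X$; (ii) if $(x_n)$ converges to a point $x\in X$, then $d(x_n,x)\preceq b_n$ for all $n\ge0$.
   Context: Vector space with convergence: a real vector space $Y$ with a relation $\to$ between sequences in $Y$ and points of $Y$ (uniqueness of limits not assumed) such that (C1) $x_n\to x$, $y_n\to y$ imply $x_n+y_n\to x+y$; (C2) $x_n\to x$, $\lambda\in\mathbb R$ imply $\lambda x_n\to\lambda x$; (C3) $\lambda_n\to\lambda$ in $\mathbb R$ imply $\lambda_n x\to\lambda x$. $A\subseteq Y$ is open if $x_n\to x\in A$ implies $x_n\in A$ for all but finitely many $n$; closed if $x_n\to x$, $x_n\in A$ $\forall n$ imply $x\in A$; $A^\circ$ is the union of all open subsets of $A$. A cone is a nonempty closed $K$ with $\lambda K\subseteq K$ ($\lambda\ge0$), $K+K\subseteq K$, $K\cap(-K)=\{0\}$; solid if $K\ne\{0\}$, $K^\circ\ne\emptyset$. A vector ordering is a partial order $\preceq$ with (V1) $x\preceq y\Rightarrow x+z\preceq y+z$; (V2) $\lambda\ge0$, $x\preceq y\Rightarrow\lambda x\preceq\lambda y$; (V3) $x_n\to x$, $y_n\to y$, $x_n\preceq y_n$ $\forall n\Rightarrow x\preceq y$. Solid vector space: positive cone $K=\{x:x\succeq0\}$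 solid, with $x\prec y$ iff $y-x\in K^\circ$. Cone metric space over $Y$: nonempty $X$ with $d\colon X\times X\to Y$, $d(x,y)\succeq0$, $d(x,y)=0$ iff $x=y$, $d(x,y)=d(y,x)$, $d(x,y)\preceq d(x,z)+d(z,y)$. Convergence in $X$: $x_n\to x$ iff for every $c\succ0$, $d(x_n,x)\prec c$ for all but finitely many $n$. Cauchy: for every $c\succ0$ there is $N$ with $d(x_n,x_m)\prec c$ for all $n,m>N$. *)

(* Defs.v *)
From HB Require Import structures.
From mathcomp Require Import all_boot all_order all_algebra.
From mathcomp Require Import reals.
Set Implicit Arguments. Unset Strict Implicit. Unset Printing Implicit Defensive.
Import Order.TTheory GRing.Theory Num.Theory.
Local Open Scope ring_scope.

Section VSConv.
Variables (R : realType) (Y : lmodType R).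

Definition rconv (lam : nat -> R) (l : R) : Prop :=
  forall e : R, 0 < e -> exists N : nat, forall n, (N <= n)%N -> `|lam n - l| < e.

Definition is_vsconv (conv : (nat -> Y) -> Y -> Prop) : Prop :=
  [/\ (forall xs ys x y, conv xs x -> conv ys y -> conv (fun n => xs n + ys n) (x + y)),
      (forall xs x (l : R), conv xs x -> conv (fun n => l *: xs n) (l *: x)) &
      (forall (lam : nat -> R) l x, rconv lam l -> conv (fun n => lam n *: x) (l *: x))].

Variable conv : (nat -> Y) -> Y -> Prop.

Definition is_open (A : Y -> Prop) : Prop :=
  forall xs x, conv xs x -> A x -> exists N : nat, forall n, (N <= n)%N -> A (xs n).

Definition is_closed (A : Y -> Prop) : Prop :=
  forall xs x, conv xs x -> (forall n, A (xs n)) -> A x.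

Definition interior (A : Y -> Prop) : Y -> Prop :=
  fun x => exists U : Y -> Prop, [/\ is_open U, (forall y, U y -> A y) & U x].

Definition is_cone (K : Y -> Prop) : Prop :=
  [/\ (exists x, K x), is_closed K,
      (forall (l : R) x, 0 <= l -> K x -> K (l *: x)),
      (forall x y, K x -> K y -> K (x + y)) &
      (forall x, K x -> K (- x) -> x = 0)].

Definition is_solid_cone (K : Y -> Prop) : Prop :=
  [/\ is_cone K, (exists x, K x /\ x <> 0) & (exists x, interior K x)].

Definition is_vector_ordering (le : Y -> Y -> Prop) : Prop :=
  [/\ [/\ (forall x, le x x),
          (forall x y, le x y -> le y x -> x = y) &
          (forall x y z, le x y -> le y z -> le x z)],
      (forall x y z, le x y -> le (x + z) (y + z)),
      (forall (l : R) x y, 0 <= l -> le x y -> le (l *: x) (l *: y)) &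
      (forall xs ys x y, conv xs x -> conv ys y -> (forall n, le (xs n) (ys n)) -> le x y)].

Definition pos_cone (le : Y -> Y -> Prop) : Y -> Prop := fun x => le 0 x.

Definition is_solid_vspace (le : Y -> Y -> Prop) : Prop :=
  [/\ is_vsconv conv, is_vector_ordering le & is_solid_cone (pos_cone le)].

Definition slt (le : Y -> Y -> Prop) (x y : Y) : Prop :=
  interior (pos_cone le) (y - x).

Section ConeMetric.
Variables (le : Y -> Y -> Prop) (X : Type) (d : X -> X -> Y).

Definition is_cone_metric : Prop :=
  [/\ (forall x y, le 0 (d x y)),
      (forall x y, d x y = 0 <-> x = y),
      (forall x y, d x y = d y x) &
      (forall x y z, le (d x y) (d x z + d z y))].

Definition cm_conv (xs : nat -> X) (x : X) : Prop :=
  forall c, slt le 0 c -> exists N : nat, forall n, (N <= n)%N -> slt le (d (xs n) x) c.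

Definition cm_cauchy (xs : nat -> X) : Prop :=
  forall c, slt le 0 c -> exists N : nat, forall n m, (N < n)%N -> (N < m)%N ->
    slt le (d (xs n) (xs m)) c.
End ConeMetric.
End VSConv.

(* Main.v *)
Require Import Defs.
From mathcomp Require Import all_boot all_order all_algebra.
From mathcomp Require Import reals.
From Stdlib Require Import FunctionalExtensionality.
Import Order.TTheory GRing.Theory Num.Theory.
Set Implicit Arguments. Unset Strict Implicit.
Local Open Scope ring_scope.

Section Aux.
Variables (R : realType) (Y : lmodType R)
  (conv : (nat -> Y) -> Y -> Prop) (le : Y -> Y -> Prop)
  (HY : is_solid_vspace conv le).

Let K := pos_cone le.

Lemma cv_ext f g y y' : (forall n, f n = g n) -> y = y' -> conv f y -> conv g y'.
Proof.
move=> H <-; have -> : g = f by apply: functional_extensionality => n; rewrite H.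
by [].
Qed.

Lemma cv_const c : conv (fun _ => c) c.
Proof.
case: HY => [[_ _ C3] _ _].
have h : rconv (fun _ : nat => (1:R)) 1.
  by move=> e he; exists 0%N => n _; rewrite subrr normr0.
apply: cv_ext (C3 _ _ c h) => [n|]; by rewrite scale1r.
Qed.

Lemma cv_add f g x y : conv f x -> conv g y -> conv (fun n => f n + g n) (x + y).
Proof. by case: HY => [[C1 _ _] _ _]; apply: C1. Qed.

Lemma cv_scale f x l : conv f x -> conv (fun n => l *: f n) (l *: x).
Proof. by case: HY => [[_ C2 _] _ _]; apply: C2. Qed.

Lemma le_K x y : le x y -> K (y - x).
Proof.
case: HY => [_ [_ V1 _ _] _] h.
by have := V1 _ _ (- x) h; rewrite subrr.
Qed.

Lemma K_le x y : K (y - x) -> le x y.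
Proof.
case: HY => [_ [_ V1 _ _] _] h.
by have := V1 _ _ x h; rewrite add0r subrK.
Qed.

Lemma K_add x y : K x -> K y -> K (x + y).
Proof. by case: HY => [_ _ [[_ _ _ Ha _] _ _]]; apply: Ha. Qed.

Lemma K_scale l x : 0 <= l -> K x -> K (l *: x).
Proof. by case: HY => [_ _ [[_ _ Hs _ _] _ _]]; apply: Hs. Qed.

Lemma int_K u : interior conv K u -> K u.
Proof. by case=> U [_ HU Uu]; apply: HU. Qed.

Lemma int_addK u k : interior conv K u -> K k -> interior conv K (u + k).
Proof.
case=> U [oU HU Uu] Kk.
exists (fun y => U (y - k)); split.
- move=> ys y cy Uy.
  have c2 : conv (fun n => ys n + (- k)) (y + (- k)) by apply: cv_add => //; apply: cv_const.
  by have [N HN] := oU _ _ c2 Uy; exists N.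
- move=> y Uy; have := K_add (HU _ Uy) Kk; by rewrite subrK.
- by rewrite addrK.
Qed.

Lemma int_scale t u : 0 < t -> interior conv K u -> interior conv K (t *: u).
Proof.
move=> t0 [U [oU HU Uu]].
exists (fun y => U (t^-1 *: y)); split.
- move=> ys y cy Uy.
  have c2 := cv_scale (t^-1) cy.
  by have [N HN] := oU _ _ c2 Uy; exists N.
- move=> y Uy; have := K_scale (l := t) (ltW t0) (HU _ Uy).
  by rewrite scalerA divff ?scale1r // gt_eqF.
- by rewrite scalerA mulVf ?scale1r // gt_eqF.
Qed.

Lemma int_event c ys : interior conv K c -> conv ys 0 ->
  exists N, forall n, (N <= n)%N -> interior conv K (c - ys n).
Proof.
move=> [U [oU HU Uu]] cy.
have c2 : conv (fun n => c + (-1) *: ys n) (c + (-1) *: 0).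
  by apply: cv_add; [apply: cv_const | apply: cv_scale].
rewrite scaler0 addr0 in c2.
have [N HN] := oU _ _ c2 Uu; exists N => n Hn.
exists U; split => //; have := HN n Hn; by rewrite scaleN1r.
Qed.

Lemma rconv_inv : rconv (fun k : nat => (k.+1%:R : R)^-1) 0.
Proof.
move=> e he; exists (Num.Def.archi_bound e^-1) => n Hn.
have he' : 0 <= e^-1 by rewrite invr_ge0 ltW.
have hb := archi_boundP he'.
rewrite subr0 ger0_norm ?invr_ge0 ?ler0n //.
rewrite -(invrK e) ltf_pV2 ?posrE ?ltr0Sn ?invr_gt0 //.
apply: (lt_le_trans hb); rewrite ler_nat; apply: leq_trans Hn _; exact: leqnSn.
Qed.

End Aux.

Theorem theorem9p20 (R : realType) (Y : lmodType R)
  (conv : (nat -> Y) -> Y -> Prop) (le : Y -> Y -> Prop)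
  (HY : is_solid_vspace conv le)
  (X : Type) (d : X -> X -> Y) (Hd : is_cone_metric le d)
  (xs : nat -> X) (b : nat -> Y)
  (Hb : forall n m : nat, (n <= m)%N -> le (d (xs n) (xs m)) (b n))
  (Hb0 : conv b 0) :
  cm_cauchy conv le d xs /\
  (forall x : X, cm_conv conv le d xs x -> forall n : nat, le (d (xs n) x) (b n)).
Proof.
have [_ [[Hrefl _ Htr] V1 _ V3] [_ _ [c0 Hc0]]] := HY.
case: Hd => [_ _ Hsym Htri].
split.
- move=> c; rewrite /slt subr0 => Hc.
  destruct (int_event HY Hc Hb0) as [N HN].
  have W : forall n m, (N < n)%N -> (n <= m)%N ->
      interior conv (pos_cone le) (c - d (xs n) (xs m)).
    move=> n m Hn nm.
    have -> : c - d (xs n) (xs m) = (c - b n) + (b n - d (xs n) (xs m)).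
      by rewrite addrA subrK.
    apply: (int_addK HY); first exact: HN _ (ltnW Hn).
    exact: (le_K HY (Hb _ _ nm)).
  exists N => n m Hn Hm; rewrite /slt.
  case: (leqP n m) => h; first exact: W.
  rewrite Hsym; apply: W => //; exact: ltnW.
- move=> x Hx n.
  have key : forall c, interior conv (pos_cone le) c -> le (d (xs n) x) (b n + c).
    move=> c Hc.
    have Hc' : slt conv le 0 c by rewrite /slt subr0.
    destruct (Hx c Hc') as [N HN].
    pose m := maxn N n.
    have h1 := HN m (leq_maxl _ _).
    have h2 : le (d (xs m) x) c by apply: (K_le HY (int_K h1)).
    apply: (Htr _ _ _ (Htri _ _ (xs m))).
    apply: (Htr _ (b n + d (xs m) x)).
      have := V1 _ _ (d (xs m) x) (Hb n m (leq_maxr _ _)); by [].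
    by rewrite ![b n + _]addrC; apply: V1.
  pose cs k := (k.+1%:R : R)^-1 *: c0.
  have ccs : conv cs 0.
    have [[_ _ C3] _ _] := HY.
    have := C3 _ _ c0 (rconv_inv (R := R)); by rewrite scale0r.
  apply: (V3 (fun _ => d (xs n) x) (fun k => b n + cs k)).
  + exact: (cv_const HY).
  + apply: (cv_ext _ _ (cv_add HY (cv_const HY (b n)) ccs)) => [k|]; first by [].
    exact: addr0.
  + move=> k; apply: key; apply: (int_scale HY _ Hc0).
    by rewrite invr_gt0 ltr0Sn.
Qed.
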